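(* Let $A(\cdot),B(\cdot),C(\cdot)$ be real, piecewise-continuous, $T$-periodic matrix functions (sizes $n\times n$, $n\times m$, $k\times n$) with $(A,B)$ controllable and $(C,A)$ observable, and let $\alpha(\cdot)>0$ be $T$-periodic. Let $P(t)=P(t+T)\succ0$ satisfy $$\dot P(t)= A(t)P(t)+P(t)A(t)^\top+\alpha(t)P(t)+\frac{1}{\alpha(t)}B(t)B(t)^\top,$$ and let $Q(t)=Q(t+T)\succ0$ satisfy $$-\dot Q(t)=Q(t)A(t)+A(t)^\top Q(t)+\alpha(t)Q(t)+C(t)^\top C(t).$$ Then $$\operatorname{size}(\mathcal{E}_\alpha)=\frac1T\int_0^T\frac{\mathrm{trace}\big(B(t)^\top Q(t)B(t)\big)}{\alpha(t)}\,dt.$$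
   Context: $\mathcal{E}_\alpha(t)=\{\mathrm{x}\in\mathbb{R}^n:\mathrm{x}^\top P(t)^{-1}\mathrm{x}\le1\}$ is the minimal periodic inescapable ellipsoid associated with $\alpha$ for the system $\dot x=A(t)x+B(t)w$, $z=C(t)x$, $\|w(t)\|\le1$, where $P$ is the periodic solution above. Its size is defined as $\operatorname{size}(\mathcal{E}_\alpha)=\frac1T\int_0^T\mathrm{trace}\big(C(t)P(t)C(t)^\top\big)\,dt$. *)

(* Defs.v *)
From HB Require Import structures.
From mathcomp Require Import all_boot all_order all_algebra.
From mathcomp Require Import all_classical all_reals all_analysis.
Set Implicit Arguments. Unset Strict Implicit. Unset Printing Implicit Defensive.
Import Order.TTheory GRing.Theory Num.Theory.
Import numFieldNormedType.Exports.
Local Open Scope classical_set_scope.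
Local Open Scope ring_scope.

Section Defs.
Variable R : realType.

Definition pw_continuous (f : R -> R) : Prop :=
  (forall a b : R, exists s : seq R,
      forall x, a <= x <= b -> x \notin s -> {for x, continuous f}) /\
  (forall x : R, cvg (f @ x^'-) /\ cvg (f @ x^'+)).

Definition pw_continuous_mx (p q : nat) (F : R -> 'M[R]_(p, q)) : Prop :=
  forall i j, pw_continuous (fun t => F t i j).

Definition periodic_fun (X : Type) (T : R) (F : R -> X) : Prop :=
  forall t, F (t + T) = F t.

Definition mx_solution_on (p q : nat) (F G : R -> 'M[R]_(p, q)) (t0 t1 : R)
  : Prop :=
  (forall i j, {within `[t0, t1], continuous (fun t => F t i j)}) /\
  exists s : seq R, forall t, t0 < t < t1 -> t \notin s ->
    forall i j, is_derive t (1 : R) (fun r => F r i j) (G t i j).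

Definition mx_solution (p q : nat) (F G : R -> 'M[R]_(p, q)) : Prop :=
  forall t0 t1, t0 <= t1 -> mx_solution_on F G t0 t1.

Definition controllable (n m : nat) (A : R -> 'M[R]_n) (B : R -> 'M[R]_(n, m))
  : Prop :=
  forall (t0 : R) (x0 x1 : 'cV[R]_n), exists t1, t0 < t1 /\
    exists (u : R -> 'cV[R]_m) (x : R -> 'cV[R]_n),
      pw_continuous_mx u /\ x t0 = x0 /\ x t1 = x1 /\
      mx_solution_on x (fun t => A t *m x t + B t *m u t) t0 t1.

(* Observability of  x' = A(t) x, z = C(t) x : for every initial time t0
   there is t1 > t0 such that the output on [t0, t1] determines x(t0)
   (equivalently, zero output forces zero initial state). *)
Definition observable (n k : nat) (C : R -> 'M[R]_(k, n)) (A : R -> 'M[R]_n)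
  : Prop :=
  forall t0 : R, exists t1, t0 < t1 /\
    forall x : R -> 'cV[R]_n,
      mx_solution_on x (fun t => A t *m x t) t0 t1 ->
      (forall t, t0 <= t <= t1 -> C t *m x t = 0) -> x t0 = 0.

Definition posdef (n : nat) (M : 'M[R]_n) : Prop :=
  M^T = M /\ forall x : 'cV[R]_n, x != 0 -> 0 < (x^T *m M *m x) 0 0.

Definition ellipsoid_size (n k : nat) (T : R) (C : R -> 'M[R]_(k, n))
  (P : R -> 'M[R]_n) : R :=
  T^-1 * \int[lebesgue_measure]_(t in `[0, T]) \tr (C t *m P t *m (C t)^T).

End Defs.

(* Main.v *)
Require Import Defs.
From HB Require Import structures.
From mathcomp Require Import all_boot all_order all_algebra.
From mathcomp Require Import all_classical all_reals all_analysis.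
From mathcomp Require Import ring lra.
From mathcomp Require Import measurable_realfun.
Import Order.TTheory GRing.Theory Num.Theory.
Import numFieldNormedType.Exports.
Local Open Scope classical_set_scope.
Local Open Scope ring_scope.

Set Implicit Arguments. Unset Strict Implicit. Unset Printing Implicit Defensive.

Section Key.
Variable R : realType.
Local Notation mu := (@lebesgue_measure R).

Lemma harmonicE (n : nat) : harmonic n = (n.+1%:R : R)^-1.
Proof. by []. Qed.

Lemma harm_le1 (n : nat) : harmonic n <= (1 : R).
Proof. by rewrite harmonicE invf_le1 // ler1n. Qed.

Lemma harm_noninc (n m : nat) : (n <= m)%N -> harmonic m <= (harmonic n : R).
Proof. by move=> nm; rewrite !harmonicE lef_pV2 ?posrE // ler_nat. Qed.

Lemma cvg_lin (c e : R) : (c + e * harmonic n) @[n --> \oo] --> c.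
Proof.
rewrite -[X in _ --> X]addr0; apply: cvgD; first exact: cvg_cst.
rewrite -(mulr0 e); apply: cvgM; first exact: cvg_cst.
exact: cvg_harmonic.
Qed.

End Key.

Section Key.
Variable R : realType.
Local Notation mu := (@lebesgue_measure R).

Lemma lim_eq (u v : nat -> \bar R) (a b : \bar R) :
  (forall n, u n = v n) -> u n @[n --> \oo] --> a -> v n @[n --> \oo] --> b -> a = b.
Proof.
move=> uv ua vb; have uv' : u = v by apply/funext.
rewrite uv' in ua; exact: (cvg_unique (@ereal_hausdorff R) ua vb).
Qed.

Lemma key (f g h : R -> R) (c d : R) :
  c < d ->
  (forall x, 0 <= f x) -> (forall x, 0 <= g x) ->
  (forall x, {for x, continuous h}) ->
  (forall x, c < x < d -> [/\ {for x, continuous f}, {for x, continuous g} &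
                             is_derive x 1 h (g x - f x)]) ->
  [/\ measurable_fun `[c, d] f, measurable_fun `[c, d] g &
   (\int[mu]_(x in `[c, d]) (g x)%:E + (h c)%:E =
    \int[mu]_(x in `[c, d]) (f x)%:E + (h d)%:E)%E].
Proof.
move=> cd f0 g0 hc good.
have cf : {in `]c, d[, continuous f}.
  by move=> x; rewrite in_itv /= => /good [].
have cg : {in `]c, d[, continuous g}.
  by move=> x; rewrite in_itv /= => /good [].
have cf' : {in `]c, d[%classic, continuous f}.
  by move=> x; rewrite inE /= in_itv /= => /good [].
have cg' : {in `]c, d[%classic, continuous g}.
  by move=> x; rewrite inE /= in_itv /= => /good [].
have mfo : measurable_fun `]c, d[ f.
  by apply: measurable_realfun.open_continuous_measurable_fun.
have mgo : measurable_fun `]c, d[ g.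
  by apply: measurable_realfun.open_continuous_measurable_fun.
have mf : measurable_fun `[c, d] f by exact: measurable_realfun.measurable_fun_itv_cc mfo.
have mg : measurable_fun `[c, d] g by exact: measurable_realfun.measurable_fun_itv_cc mgo.
split => //.
pose e := (d - c) / 3.
have e0 : 0 < e by rewrite divr_gt0 // subr_gt0.
pose cn n := c + e * harmonic n.
pose dn n := d - e * harmonic n.
have hn0 n : 0 < harmonic n :> R by exact: harmonic_gt0.
have hn1 n : harmonic n <= 1 :> R by exact: harm_le1.
have ccn n : c < cn n by rewrite /cn ltrDl mulr_gt0.
have dnd n : dn n < d by rewrite /dn ltrBlDr ltrDl mulr_gt0.
have cndn n : cn n < dn n.
  have : e * harmonic n <= e by rewrite ler_piMr // ltW.
  rewrite /cn /dn /e; move: (harmonic n) => p; lra.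
have inn n x : cn n <= x <= dn n -> c < x < d.
  by move=> /andP[a b]; rewrite (lt_le_trans (ccn n) a) (le_lt_trans b (dnd n)).
pose F n := `[cn n, dn n]%classic : set R.
have mF n : measurable (F n) by exact: measurable_itv.
have FS n : F n `<=` `]c, d[.
  by move=> x /=; rewrite !in_itv /= => /inn.
have ndF : {homo F : n m / (n <= m)%N >-> (n <= m)%O}.
  move=> n m nm; rewrite subsetEset => x; rewrite /F /= !in_itv /= => /andP[a b].
  have hh := harm_noninc R nm.
  apply/andP; split.
    by apply: le_trans a; rewrite /cn lerD2l ler_wpM2l // ltW.
  by apply: (le_trans b); rewrite /dn lerD2l lerN2 ler_wpM2l // ltW.
have UF : \bigcup_n F n = `]c, d[%classic.
  apply/seteqP; split; first by move=> x [n _]; exact: FS.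
  move=> x /=; rewrite in_itv /= => /andP[cx xd].
  have m0 : 0 < Num.min (x - c) (d - x) by rewrite lt_min !subr_gt0 cx xd.
  have : \forall n \near \oo, e * harmonic n <= Num.min (x - c) (d - x).
    have := @cvg_lin R 0 e.
    move=> /cvgrPdist_le /(_ _ m0) [N _ HN].
    exists N => // n /HN; rewrite sub0r normrN add0r ger0_norm //.
    by rewrite mulr_ge0 // ltW.
  move=> [N _ HN]; exists N => //.
  have := HN N (leqnn N); rewrite le_min => /andP[a b].
  rewrite /F /= in_itv /= /cn /dn; apply/andP; split.
    by rewrite -lerBrDl.
  by rewrite lerBrDl -lerBrDr.
have eqn n : (\int[mu]_(x in F n) (g x)%:E + (h (cn n))%:E =
              \int[mu]_(x in F n) (f x)%:E + (h (dn n))%:E)%E.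
  have cfn : {within `[cn n, dn n], continuous f}.
    apply: continuous_in_subspaceT => x; rewrite inE /= => /inn /good []//.
  have cgn : {within `[cn n, dn n], continuous g}.
    apply: continuous_in_subspaceT => x; rewrite inE /= => /inn /good []//.
  have ifn : mu.-integrable `[cn n, dn n] (EFin \o f).
    by apply: continuous_compact_integrable => //; exact: segment_compact.
  have ign : mu.-integrable `[cn n, dn n] (EFin \o g).
    by apply: continuous_compact_integrable => //; exact: segment_compact.
  have cphi : {within `[cn n, dn n], continuous (fun x => g x - f x)}.
    apply: continuous_in_subspaceT => x; rewrite inE /= => /inn /good [a b _].
    exact: cvgB.
  have dh : derivable_oo_LRcontinuous h (cn n) (dn n).
    split.
    - move=> x; rewrite in_itv /= => /andP[a b].
      have /good [_ _ [] //] : c < x < d by rewrite (lt_trans (ccn n) a) (lt_trans b (dnd n)).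
    - exact/cvg_at_right_filter/hc.
    - exact/cvg_at_left_filter/hc.
  have dh' : {in `]cn n, dn n[, h^`()%classic =1 (fun x => g x - f x)}.
    move=> x; rewrite in_itv /= => /andP[a b].
    have /good [_ _ D] : c < x < d by rewrite (lt_trans (ccn n) a) (lt_trans b (dnd n)).
    by rewrite derive.derive1E derive.derive_val.
  have E0 := continuous_FTC2 (cndn n) cphi dh dh'.
  rewrite integralB_EFin // in E0.
  have fin1 : (\int[mu]_(x in `[cn n, dn n]) (f x)%:E)%E \is a fin_num.
    by apply: (integrable_fin_num _ ifn).
  have fin2 : (\int[mu]_(x in `[cn n, dn n]) (g x)%:E)%E \is a fin_num.
    by apply: (integrable_fin_num _ ign).
  rewrite /F -(fineK fin1) -(fineK fin2).
  rewrite -(fineK fin1) -(fineK fin2) in E0.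
  move: E0; move: (fine _) (fine _) => u v.
  rewrite -!EFinB -!EFinD => E1; have := EFin_inj E1 => {E1} E2.
  congr EFin; lra.
have lg : (\int[mu]_(x in F n) (g x)%:E @[n --> \oo] --> \int[mu]_(x in `]c, d[) (g x)%:E)%E.
  rewrite -UF; apply: ge0_nondecreasing_set_cvg_integral => //.
  - move=> i; apply/measurable_EFinP; exact: measurable_funS mgo.
  - by move=> i x _; rewrite lee_fin.
have lf : (\int[mu]_(x in F n) (f x)%:E @[n --> \oo] --> \int[mu]_(x in `]c, d[) (f x)%:E)%E.
  rewrite -UF; apply: ge0_nondecreasing_set_cvg_integral => //.
  - move=> i; apply/measurable_EFinP; exact: measurable_funS mfo.
  - by move=> i x _; rewrite lee_fin.
have lhc : ((h (cn n))%:E @[n --> \oo] --> (h c)%:E)%E.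
  apply: cvg_EFin; first exact: nearW.
  exact: (continuous_cvg _ (hc c) (@cvg_lin R c e)).
have lhd : ((h (dn n))%:E @[n --> \oo] --> (h d)%:E)%E.
  apply: cvg_EFin; first exact: nearW.
  apply: (continuous_cvg _ (hc d)).
  have -> : dn = (fun n => d + (- e) * harmonic n).
    by apply/funext => n; rewrite /dn mulNr.
  exact: cvg_lin.
have E : (\int[mu]_(x in `]c, d[) (g x)%:E + (h c)%:E =
          \int[mu]_(x in `]c, d[) (f x)%:E + (h d)%:E)%E.
  apply: (lim_eq eqn).
  - apply: cvgeD; last exact: lhc. exact: fin_num_adde_defl. exact: lg.
  - apply: cvgeD; last exact: lhd. exact: fin_num_adde_defl. exact: lf.
have eg : (\int[mu]_(x in `[c, d]) (g x)%:E = \int[mu]_(x in `]c, d[) (g x)%:E)%E.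
  by apply: (@integral_itv_bndoo R c d (fun x => (g x)%:E) true false); exact/measurable_EFinP.
have ef : (\int[mu]_(x in `[c, d]) (f x)%:E = \int[mu]_(x in `]c, d[) (f x)%:E)%E.
  by apply: (@integral_itv_bndoo R c d (fun x => (f x)%:E) true false); exact/measurable_EFinP.
by rewrite eg ef.
Qed.

End Key.

Section Ind.
Variable R : realType.
Local Notation mu := (@lebesgue_measure R).

Lemma combine (A1 A2 B1 B2 x y z : \bar R) :
  (A1 + x = B1 + y)%E -> (A2 + y = B2 + z)%E -> ((A1 + A2) + x = (B1 + B2) + z)%E.
Proof.
move=> E1 E2.
transitivity ((A1 + x) + A2)%E; first by rewrite -addeA [(A2 + x)%E]addeC addeA.
rewrite E1 -addeA [(y + A2)%E]addeC E2.
by rewrite addeA.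
Qed.

Lemma split_ind (f g h : R -> R) (s : seq R) :
  (forall x, 0 <= f x) -> (forall x, 0 <= g x) ->
  (forall x, {for x, continuous h}) ->
  forall a b, a < b ->
  (forall x, a < x < b -> x \notin s ->
     [/\ {for x, continuous f}, {for x, continuous g} &
         is_derive x 1 h (g x - f x)]) ->
  [/\ measurable_fun `[a, b] f, measurable_fun `[a, b] g &
   (\int[mu]_(x in `[a, b]) (g x)%:E + (h a)%:E =
    \int[mu]_(x in `[a, b]) (f x)%:E + (h b)%:E)%E].
Proof.
move=> f0 g0 hc; elim: s => [|p s IH] a b ab good.
  by apply: key => // x xab; apply: good.
have [pin|pout] := boolP (a < p < b); last first.
  apply: IH => // x xab xs; apply: good => //.
  rewrite in_cons negb_or xs andbT; apply: contraNneq pout => <-//.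
move: pin => /andP[ap pb].
have goodL : forall x, a < x < p -> x \notin s -> [/\ {for x, continuous f}, {for x, continuous g} & is_derive x 1 h (g x - f x)].
  move=> x /andP[ax xp] xs; apply: good; first by rewrite ax (lt_trans xp pb).
  by rewrite in_cons negb_or xs andbT; apply/eqP => xe; move: xp; rewrite xe ltxx.
have goodR : forall x, p < x < b -> x \notin s -> [/\ {for x, continuous f}, {for x, continuous g} & is_derive x 1 h (g x - f x)].
  move=> x /andP[px xb] xs; apply: good; first by rewrite xb (lt_trans ap px).
  by rewrite in_cons negb_or xs andbT; apply/eqP => xe; move: px; rewrite xe ltxx.
have [mf1 mg1 E1] := IH a p ap goodL.
have [mf2 mg2 E2] := IH p b pb goodR.
have U : `[a, b]%classic = `[a, p]%classic `|` `]p, b]%classic :> set R.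
  apply/seteqP; split => x /=; rewrite !in_itv /=.
    move=> /andP[ax xb]; have [xp|px] := leP x p; [left|right]; apply/andP; split => //.
  case=> /andP[u v]; apply/andP; split => //; first exact: le_trans v (ltW pb).
  exact: le_trans (ltW ap) (ltW u).
have D : [disjoint `[a, p]%classic & `]p, b]%classic].
  rewrite disj_set2E; apply/eqP/seteqP; split => // x /= [].
  by rewrite !in_itv /= => /andP[_ xp] /andP[px _]; move: (le_lt_trans xp px); rewrite ltxx.
have sub : `]p, b]%classic `<=` `[p, b]%classic.
  by move=> x /=; rewrite !in_itv /= => /andP[u v]; rewrite v (ltW u).
have mf2' : measurable_fun `]p, b] f by exact: measurable_funS sub mf2.
have mg2' : measurable_fun `]p, b] g by exact: measurable_funS sub mg2.
have mfU : measurable_fun `[a, b] f.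
  by rewrite U; apply/measurable_funU => //; split.
have mgU : measurable_fun `[a, b] g.
  by rewrite U; apply/measurable_funU => //; split.
split => //.
rewrite U !ge0_integral_setU //=; first last.
- by move=> x _; rewrite lee_fin.
- by rewrite -U; exact/measurable_EFinP.
- by move=> x _; rewrite lee_fin.
- by rewrite -U; exact/measurable_EFinP.
rewrite !(@integral_itv_obnd_cbnd R p (BRight b)); first last.
- exact/measurable_EFinP.
- exact/measurable_EFinP.
exact: combine E1 E2.
Qed.

End Ind.

Section Mx.
Variable R : realType.

Lemma cont_sum (I : Type) (r : seq I) (F : I -> R -> R) (x : R) :
  (forall i, {for x, continuous (F i)}) ->
  {for x, continuous (fun t => \sum_(i <- r) F i t)}.
Proof.
move=> H; elim: r => [|i r IH].
  have -> : (fun t => \sum_(i <- [::]) F i t) = (fun=> 0).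
    by apply/funext => t; rewrite big_nil.
  exact: cst_continuous.
have -> : (fun t => \sum_(j <- i :: r) F j t) = (F i + (fun t => \sum_(j <- r) F j t)).
  by apply/funext => t; rewrite big_cons.
exact: continuousD.
Qed.

Lemma cont_mul (f g : R -> R) (x : R) :
  {for x, continuous f} -> {for x, continuous g} ->
  {for x, continuous (fun t => f t * g t)}.
Proof. by move=> cf cg; apply: continuousM. Qed.

Definition mcont (p q : nat) (M : R -> 'M[R]_(p, q)) (x : R) :=
  forall i j, {for x, continuous (fun t => M t i j)}.

Lemma mcont_mul p q r (M : R -> 'M[R]_(p, q)) (N : R -> 'M[R]_(q, r)) x :
  mcont M x -> mcont N x -> mcont (fun t => M t *m N t) x.
Proof.
move=> cM cN i j.
have -> : (fun t => (M t *m N t) i j) = (fun t => \sum_k M t i k * N t k j).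
  by apply/funext => t; rewrite mxE.
by apply: cont_sum => k; apply: cont_mul.
Qed.

Lemma mcont_tr p q (M : R -> 'M[R]_(p, q)) x :
  mcont M x -> mcont (fun t => (M t)^T) x.
Proof.
move=> cM i j.
have -> : (fun t => (M t)^T i j) = (fun t => M t j i) by apply/funext => t; rewrite mxE.
exact: cM.
Qed.

Lemma cont_trace p (M : R -> 'M[R]_p) x :
  mcont M x -> {for x, continuous (fun t => \tr (M t))}.
Proof. by move=> cM; apply: cont_sum => i; exact: cM. Qed.

Lemma der_sum (I : Type) (r : seq I) (F : I -> R -> R) (F' : I -> R) (x : R) :
  (forall i, is_derive x 1 (F i) (F' i)) ->
  is_derive x 1 (fun t => \sum_(i <- r) F i t) (\sum_(i <- r) F' i).
Proof.
move=> H; elim: r => [|i r IH].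
  under eq_fun do rewrite big_nil; rewrite big_nil; exact: is_derive_cst.
under eq_fun do rewrite big_cons; rewrite big_cons; exact: is_deriveD.
Qed.

Definition mder (p q : nat) (M : R -> 'M[R]_(p, q)) (M' : 'M[R]_(p, q)) (x : R) :=
  forall i j, is_derive x 1 (fun t => M t i j) (M' i j).

Lemma mder_mul p q r (M : R -> 'M[R]_(p, q)) (N : R -> 'M[R]_(q, r)) M' N' x :
  mder M M' x -> mder N N' x ->
  mder (fun t => M t *m N t) (M' *m N x + M x *m N') x.
Proof.
move=> dM dN i j.
have -> : (fun t => (M t *m N t) i j) = (fun t => \sum_k M t i k * N t k j).
  by apply/funext => t; rewrite mxE.
have -> : (M' *m N x + M x *m N') i j =
          \sum_k (M x i k *: N' k j + N x k j *: M' i k).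
  rewrite !mxE big_split /= addrC; congr (_ + _); apply: eq_bigr => k _.
  by rewrite mulrC.
apply: der_sum => k; exact: is_deriveM.
Qed.

Lemma der_trace p (M : R -> 'M[R]_p) M' x :
  mder M M' x -> is_derive x 1 (fun t => \tr (M t)) (\tr M').
Proof. by move=> dM; apply: der_sum => i; exact: dM. Qed.

Lemma der_cont (f : R -> R) (x df : R) : is_derive x 1 f df -> {for x, continuous f}.
Proof.
move=> D; apply: differentiable_continuous; apply/derivable1_diffP.
exact: ex_derive.
Qed.

Lemma tr_nonneg p q (Q : 'M[R]_p) (M : 'M[R]_(p, q)) :
  posdef Q -> 0 <= \tr (M^T *m Q *m M).
Proof.
move=> [_ PQ]; rewrite /mxtrace; apply: sumr_ge0 => i _.
have -> : (M^T *m Q *m M) i i = ((col i M)^T *m Q *m col i M) 0 0.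
  rewrite !mxE; apply: eq_bigr => l _; rewrite !mxE; congr (_ * _).
  by apply: eq_bigr => k _; rewrite !mxE.
have [->|nz] := eqVneq (col i M) 0.
  by rewrite mulmx0 mxE.
exact/ltW/PQ.
Qed.

End Mx.

Lemma trace_alg (F : fieldType) (n m k : nat) (A Q P : 'M[F]_n) (B : 'M[F]_(n, m))
  (C : 'M[F]_(k, n)) (a : F) :
  \tr ((- (Q *m A + A^T *m Q + a *: Q + C^T *m C)) *m P +
       Q *m (A *m P + P *m A^T + a *: P + a^-1 *: (B *m B^T))) =
  \tr (B^T *m Q *m B) / a - \tr (C *m P *m C^T).
Proof.
rewrite mulNmx !mulmxDl !mulmxDr -!scalemxAl -!scalemxAr.
rewrite !raddfD /= !raddfN /= !mxtraceZ.
have e1 : \tr (Q *m (A *m P)) = \tr (Q *m A *m P) by rewrite mulmxA.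
have e2 : \tr (Q *m (P *m A^T)) = \tr (A^T *m Q *m P).
  by rewrite mulmxA mxtrace_mulC mulmxA.
have e3 : \tr (C^T *m C *m P) = \tr (C *m P *m C^T).
  by rewrite -mulmxA mxtrace_mulC.
have e4 : \tr (Q *m (B *m B^T)) = \tr (B^T *m Q *m B).
  by rewrite mulmxA mxtrace_mulC mulmxA.
rewrite e1 e2 e3 e4.
ring.
Qed.

Lemma combine_lists (R : realType) (I : finType) (Pr : I -> R -> Prop) :
  (forall i, exists s : seq R, forall x, x \notin s -> Pr i x) ->
  exists s : seq R, forall x, x \notin s -> forall i, Pr i x.
Proof.
move=> H; pose sf i := projT1 (cid (H i)).
exists (flatten [seq sf i | i <- enum I]) => x xs i.
apply: (projT2 (cid (H i))); apply: contra xs => xi.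
by apply/flattenP; exists (sf i) => //; apply: map_f; rewrite mem_enum.
Qed.

Lemma within_cont_pt (R : realType) (f : R -> R) a b x : a < x < b ->
  {within `[a, b], continuous f} -> {for x, continuous f}.
Proof.
move=> /andP[ax xb] /(continuous_within_itvP _ (lt_trans ax xb)) [H _ _].
by apply: H; rewrite in_itv /= ax xb.
Qed.

Unset Implicit Arguments.
Set Strict Implicit.

Theorem theorem2 (R : realType) (n m k : nat) (T : R)
  (A : R -> 'M[R]_n) (B : R -> 'M[R]_(n, m)) (C : R -> 'M[R]_(k, n))
  (alpha : R -> R) (P Q : R -> 'M[R]_n) :
  0 < T ->
  pw_continuous_mx A -> pw_continuous_mx B -> pw_continuous_mx C ->
  periodic_fun T A -> periodic_fun T B -> periodic_fun T C ->
  controllable A B -> observable C A ->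
  (forall t, 0 < alpha t) -> periodic_fun T alpha -> pw_continuous alpha ->
  periodic_fun T P -> (forall t, posdef (P t)) ->
  mx_solution P (fun t => A t *m P t + P t *m (A t)^T + alpha t *: P t
                          + (alpha t)^-1 *: (B t *m (B t)^T)) ->
  periodic_fun T Q -> (forall t, posdef (Q t)) ->
  mx_solution Q (fun t => - (Q t *m A t + (A t)^T *m Q t + alpha t *: Q t
                             + (C t)^T *m C t)) ->
  ellipsoid_size T C P =
    T^-1 * \int[lebesgue_measure]_(t in `[0, T])
             (\tr ((B t)^T *m Q t *m B t) / alpha t).
Proof.
move=> T0 pwA pwB pwC perA perB perC _ _ a0 pera pwa perP HP solP perQ HQ solQ.
pose f t := \tr (C t *m P t *m (C t)^T).
pose g t := \tr ((B t)^T *m Q t *m B t) / alpha t.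
pose h t := \tr (Q t *m P t).
have f0 t : 0 <= f t.
  by have := tr_nonneg ((C t)^T) (HP t); rewrite trmxK.
have g0 t : 0 <= g t by rewrite /g divr_ge0 // ?tr_nonneg // ltW.
have contP x : mcont P x.
  move=> i j; have [cP _] := solP (x - 1) (x + 1) ltac:(lra).
  have hx : x - 1 < x < x + 1 by apply/andP; split; lra.
  exact: (@within_cont_pt R _ (x - 1) (x + 1) x hx (cP i j)).
have contQ x : mcont Q x.
  move=> i j; have [cQ _] := solQ (x - 1) (x + 1) ltac:(lra).
  have hx : x - 1 < x < x + 1 by apply/andP; split; lra.
  exact: (@within_cont_pt R _ (x - 1) (x + 1) x hx (cQ i j)).
have hc x : {for x, continuous h} by apply: cont_trace; apply: mcont_mul.
have [_ [sP HsP]] := solP 0 T (ltW T0).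
have [_ [sQ HsQ]] := solQ 0 T (ltW T0).
have [sA HsA] := @combine_lists R _
  (fun ij x => 0 <= x <= T -> {for x, continuous (fun t => A t ij.1 ij.2)})
  (fun ij => let: exist s Hs := cid ((pwA ij.1 ij.2).1 0 T) in ex_intro _ s (fun x xs xT => Hs x xT xs)).
have [sB HsB] := @combine_lists R _
  (fun ij x => 0 <= x <= T -> {for x, continuous (fun t => B t ij.1 ij.2)})
  (fun ij => let: exist s Hs := cid ((pwB ij.1 ij.2).1 0 T) in ex_intro _ s (fun x xs xT => Hs x xT xs)).
have [sC HsC] := @combine_lists R _
  (fun ij x => 0 <= x <= T -> {for x, continuous (fun t => C t ij.1 ij.2)})
  (fun ij => let: exist s Hs := cid ((pwC ij.1 ij.2).1 0 T) in ex_intro _ s (fun x xs xT => Hs x xT xs)).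
have [sa Hsa] := pwa.1 0 T.
pose S := sP ++ sQ ++ sA ++ sB ++ sC ++ sa.
have good x : 0 < x < T -> x \notin S ->
    [/\ {for x, continuous f}, {for x, continuous g} & is_derive x 1 h (g x - f x)].
  move=> xT; rewrite !mem_cat !negb_or.
  move=> /andP[xP /andP[xQ /andP[xA /andP[xB /andP[xC xa]]]]].
  have xT' : 0 <= x <= T by case/andP: xT => u v; rewrite !ltW.
  have dP := HsP x xT xP.
  have dQ := HsQ x xT xQ.
  have cA : mcont A x := fun i j => HsA x xA (i, j) xT'.
  have cB : mcont B x := fun i j => HsB x xB (i, j) xT'.
  have cC : mcont C x := fun i j => HsC x xC (i, j) xT'.
  have ca : {for x, continuous alpha} := Hsa x xT' xa.
  split.
  - apply: cont_trace; apply: mcont_mul; first exact: mcont_mul.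
    exact: mcont_tr.
  - apply: cont_mul; first by apply: cont_trace; apply: mcont_mul => //; apply: mcont_mul => //; exact: mcont_tr.
    by apply: continuousV => //; rewrite gt_eqF.
  - have D := der_trace (mder_mul dQ dP).
    by rewrite trace_alg in D.
have [_ _ E] := split_ind (s := S) f0 g0 hc T0 good.
have hT : h T = h 0.
  by rewrite /h; have := perP 0; have := perQ 0; rewrite add0r => -> ->.
rewrite /ellipsoid_size; congr (_ * _); rewrite /Rintegral; congr fine.
rewrite hT in E.
have := congr1 (fun z => z - (h 0)%:E)%E E; rewrite !addeK //.
Qed.
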